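(* Let $\mathbf{u},\mathbf{v}\in\mathbb{R}^2$ be fixed linearly independent unit vectors, and let $D_1\subset\mathbb{R}^2$ be an open disc of radius $r_1$ centered at the origin. Let $\mathbf{f}=(f_1,f_2)$ be a vector field on $\mathbb{R}^2$ with $f_1,f_2\in C^2_c(D_1)$. Then the transverse V-line transform satisfies $\mathcal{T}\mathbf{f}\equiv 0$ on $\mathbb{R}^2$ if and only if $\operatorname{div}\mathbf{f}=\frac{\partial f_1}{\partial x_1}+\frac{\partial f_2}{\partial x_2}=0$.
   Context: For a function $h$ on $\mathbb{R}^2$ and a unit vector $\mathbf{u}$, the divergent beam transform is $\mathcal{X}_{\mathbf{u}}h(\mathbf{x})=\int_0^\infty h(\mathbf{x}+t\mathbf{u})\,dt$. For $\mathbf{x}=(x_1,x_2)$ set $\mathbf{x}^\perp=(-x_2,x_1)$. The transverse V-line transform of $\mathbf{f}$ (with respect to the fixed directions $\mathbf{u},\mathbf{v}$) is the function on $\mathbb{R}^2$ given by $\mathcal{T}\mathbf{f}=-\mathcal{X}_{\mathbf{u}}(\mathbf{f}\cdot\mathbf{u}^\perp)+\mathcal{X}_{\mathbf{v}}(\mathbf{f}\cdot\mathbf{v}^\perp)$, where $\cdot$ is the Euclidean dot product. *)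

(* Defs.v *)
From Stdlib Require Import Reals.
From Coquelicot Require Import Coquelicot.
Open Scope R_scope.

Definition pt := (R * R)%type.

Definition d1 (f : pt -> R) (x : pt) : R := Derive (fun t => f (t, snd x)) (fst x).
Definition d2 (f : pt -> R) (x : pt) : R := Derive (fun t => f (fst x, t)) (snd x).

Definition C1 (f : pt -> R) : Prop :=
  (forall x, continuous f x) /\
  (forall x, ex_derive (fun t => f (t, snd x)) (fst x)) /\
  (forall x, ex_derive (fun t => f (fst x, t)) (snd x)) /\
  (forall x, continuous (d1 f) x) /\ (forall x, continuous (d2 f) x).

Definition C2 (f : pt -> R) : Prop := C1 f /\ C1 (d1 f) /\ C1 (d2 f).

Definition eucl_norm (x : pt) : R := sqrt (fst x ^ 2 + snd x ^ 2).

(* supp f (closure of {f <> 0}) is a compact subset of the open disc D(0, r1):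
   equivalently, f vanishes outside some closed disc of radius r < r1 *)
Definition compact_support_in_disc (f : pt -> R) (r1 : R) : Prop :=
  exists r, 0 <= r < r1 /\ forall x, r < eucl_norm x -> f x = 0.

Definition Cc2 (f : pt -> R) (r1 : R) : Prop := C2 f /\ compact_support_in_disc f r1.

Definition dot (a b : pt) : R := fst a * fst b + snd a * snd b.
Definition perp (x : pt) : pt := (- snd x, fst x).

Definition beam (u : pt) (h : pt -> R) (x : pt) : R :=
  RInt_gen (fun t => h (fst x + t * fst u, snd x + t * snd u))
    (at_point 0) (Rbar_locally p_infty).

Definition TV (u v : pt) (f1 f2 : pt -> R) (x : pt) : R :=
  - beam u (fun y => dot (f1 y, f2 y) (perp u)) x
  + beam v (fun y => dot (f1 y, f2 y) (perp v)) x.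

Definition div_field (f1 f2 : pt -> R) (x : pt) : R := d1 f1 x + d2 f2 x.

(* Main.v *)
Require Import Defs.
From Stdlib Require Import Reals Lra Psatz.
From Coquelicot Require Import Coquelicot.
Import Defs.
Open Scope R_scope.

Definition lin (x w : pt) (s : R) : pt := (fst x + s * fst w, snd x + s * snd w).

Lemma cont_pair {U : UniformSpace} (f g : U -> R) (x : U) :
  continuous f x -> continuous g x -> continuous (fun z => ((f z, g z) : R * R)) x.
Proof.
  intros Hf Hg. unfold continuous.
  apply (proj2 (filterlim_locally _ _)). intros eps.
  apply (proj1 (filterlim_locally _ _)) with (eps := eps) in Hf.
  apply (proj1 (filterlim_locally _ _)) with (eps := eps) in Hg.
  generalize (filter_and _ _ Hf Hg). apply filter_imp. intros z [H1 H2].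
  split; assumption.
Qed.

Lemma cont_aff1 (a b t0 : R) : continuous (fun t : R => a + t * b) t0.
Proof.
  apply (ex_derive_continuous (fun t : R => a + t * b)). auto_derive. auto.
Qed.

Lemma cont_lin (x w : pt) t0 : continuous (lin x w) t0.
Proof.
  unfold lin. apply cont_pair; apply cont_aff1.
Qed.

Lemma cont_aff2 (a b c s0 t0 : R) :
  continuous (fun z : R * R => a + fst z * b + snd z * c) (s0, t0).
Proof.
  apply (continuous_plus (fun z : R * R => a + fst z * b) (fun z : R * R => snd z * c)).
  apply (continuous_plus (fun z : R * R => a) (fun z : R * R => fst z * b)).
  apply continuous_const.
  apply (continuous_mult (fun z : R*R => fst z) (fun _ => b)). apply continuous_fst. apply continuous_const.
  apply (continuous_mult (fun z : R*R => snd z) (fun _ => c)). apply continuous_snd. apply continuous_const.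
Qed.

Lemma cont_lin2 (x u v : pt) s0 t0 :
  continuous (fun z : R * R => lin (lin x u (fst z)) v (snd z)) (s0, t0).
Proof.
  unfold lin; simpl. apply cont_pair.
  - apply cont_aff2.
  - apply cont_aff2.
Qed.

Definition Dw (w : pt) (g : pt -> R) (y : pt) : R := fst w * d1 g y + snd w * d2 g y.

Lemma chain (g : pt -> R) (Hg : C1 g) (x w : pt) (s0 : R) :
  is_derive (fun s => g (lin x w s)) s0 (Dw w g (lin x w s0)).
Proof.
  destruct Hg as [Hc [Hd1 [Hd2 [Hc1 Hc2]]]].
  set (y := lin x w s0).
  set (G := fun a b => g (a, b)).
  assert (Hdiff : differentiable_pt_lim G (fst y) (snd y) (d1 g y) (d2 g y)).
  { apply filterdiff_differentiable_pt_lim.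
    eapply filterdiff_ext_lin.
    apply (is_derive_filterdiff G (fst y) (snd y) (fun a b => d1 g (a, b)) (d2 g y)).
    - apply filter_forall. intros z. apply Derive_correct. apply (Hd1 z).
    - destruct y as [y1 y2]. apply Derive_correct. apply (Hd2 (y1,y2)).
    - apply (Hc1 (fst y, snd y)).
    - intros z. reflexivity. }
  apply is_derive_Reals.
  unfold Dw.
  replace (fst w * d1 g y + snd w * d2 g y) with (d1 g y * fst w + d2 g y * snd w) by ring.
  apply (derivable_pt_lim_comp_2d G (fun s => fst x + s * fst w) (fun s => snd x + s * snd w) s0).
  - exact Hdiff.
  - apply is_derive_Reals. auto_derive. auto. ring.
  - apply is_derive_Reals. auto_derive. auto. ring.
Qed.

Definition vanish (r : R) (g : pt -> R) := forall y : pt, r ^ 2 < fst y ^ 2 + snd y ^ 2 -> g y = 0.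

Lemma supp_of_Cc (f : pt -> R) r1 : compact_support_in_disc f r1 -> exists r, 0 <= r /\ vanish r f.
Proof.
  intros [r [[H0 _] H]]. exists r. split; auto. intros y Hy. apply H.
  unfold eucl_norm. rewrite <- (sqrt_pow2 r H0). apply sqrt_lt_1_alt. split. nra. exact Hy.
Qed.

Lemma vanish_mono r r' g : 0 <= r -> r <= r' -> vanish r g -> vanish r' g.
Proof. intros H0 H1 H y Hy. apply H. nra. Qed.

Lemma vanish_w r g (w y : pt) : 0 <= r -> vanish r g -> fst w ^ 2 + snd w ^ 2 = 1 ->
  r < Rabs (fst w * fst y + snd w * snd y) -> g y = 0.
Proof.
  intros H0 H Hw Hy. apply H.
  assert (CS : (fst w * fst y + snd w * snd y) ^ 2 <= fst y ^ 2 + snd y ^ 2).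
  { assert (E : (fst w ^ 2 + snd w ^ 2) * (fst y ^ 2 + snd y ^ 2) - (fst w * fst y + snd w * snd y) ^ 2
        = (fst w * snd y - snd w * fst y) ^ 2) by ring.
    rewrite Hw in E. pose proof (pow2_ge_0 (fst w * snd y - snd w * fst y)). lra. }
  assert (r ^ 2 < (fst w * fst y + snd w * snd y) ^ 2).
  { pose proof (pow2_abs (fst w * fst y + snd w * snd y)) as E. rewrite <- E. nra. }
  lra.
Qed.

Lemma loc_zero_aux (r a b : R) : 0 <= r -> r ^ 2 < a ^ 2 + b ^ 2 ->
  locally a (fun t : R => r ^ 2 < t ^ 2 + b ^ 2).
Proof.
  intros H0 H. set (m := a ^ 2 + b ^ 2 - r ^ 2).
  assert (Hm : 0 < m) by (unfold m; lra).
  assert (Ha : 0 <= Rabs a) by apply Rabs_pos.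
  assert (He : 0 < m / (2 * Rabs a + 1)) by (apply Rdiv_lt_0_compat; lra).
  exists (mkposreal _ He). intros t Ht. simpl in Ht.
  change (Rabs (t - a) < m / (2 * Rabs a + 1)) in Ht.
  assert (Hk : Rabs (t - a) * (2 * Rabs a + 1) < m).
  { apply (Rmult_lt_compat_r (2 * Rabs a + 1)) in Ht; [|lra].
    unfold Rdiv in Ht. rewrite Rmult_assoc, Rinv_l in Ht by lra. lra. }
  assert (Hp : Rabs (2 * a * (t - a)) <= 2 * Rabs a * Rabs (t - a)).
  { rewrite !Rabs_mult. rewrite (Rabs_right 2) by lra. lra. }
  assert (t ^ 2 = a ^ 2 + 2 * a * (t - a) + (t - a) ^ 2) by ring.
  assert (- Rabs (2 * a * (t - a)) <= 2 * a * (t - a)).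
  { pose proof (Rle_abs (- (2 * a * (t - a)))) as E. rewrite Rabs_Ropp in E. lra. }
  assert (0 <= (t - a) ^ 2) by apply pow2_ge_0.
  unfold m in Hk. pose proof (Rabs_pos (t - a)). nra.
Qed.

Lemma vanish_d1 r g : 0 <= r -> vanish r g -> vanish r (d1 g).
Proof.
  intros H0 H y Hy. unfold d1.
  rewrite (Derive_ext_loc _ (fun _ => 0)). apply Derive_const.
  generalize (loc_zero_aux r (fst y) (snd y) H0 Hy). apply filter_imp.
  intros t Ht. apply H. simpl. exact Ht.
Qed.

Lemma vanish_d2 r g : 0 <= r -> vanish r g -> vanish r (d2 g).
Proof.
  intros H0 H y Hy. unfold d2.
  rewrite (Derive_ext_loc _ (fun _ => 0)). apply Derive_const.
  assert (Hy' : r ^ 2 < snd y ^ 2 + fst y ^ 2) by lra.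
  generalize (loc_zero_aux r (snd y) (fst y) H0 Hy'). apply filter_imp.
  intros t Ht. apply H. simpl. lra.
Qed.

Lemma cont_comp_lin (g : pt -> R) x w t0 : (forall z, continuous g z) ->
  continuous (fun t => g (lin x w t)) t0.
Proof. intros Hg. apply (continuous_comp (lin x w) g). apply cont_lin. apply Hg. Qed.

Lemma exR (g : pt -> R) x w a b : (forall z, continuous g z) ->
  ex_RInt (fun t => g (lin x w t)) a b.
Proof. intros Hg. apply (@ex_RInt_continuous R_CompleteNormedModule). intros z _. apply cont_comp_lin; auto. Qed.

Lemma beam_trunc (w : pt) (g : pt -> R) (x : pt) (M : R) :
  (forall z, continuous g z) -> 0 <= M -> (forall t, M <= t -> g (lin x w t) = 0) ->
  beam w g x = RInt (fun t => g (lin x w t)) 0 M.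
Proof.
  intros Hg HM Hz. unfold beam.
  apply is_RInt_gen_unique.
  intros P HP. simpl.
  apply Filter_prod with (fun a => a = 0) (fun b => M < b).
  - reflexivity.
  - exists M. auto.
  - intros a b -> Hb. exists (RInt (fun t => g (lin x w t)) 0 M). split.
    + simpl. 
      replace (RInt (fun t => g (lin x w t)) 0 M) with (RInt (fun t => g (lin x w t)) 0 b).
      apply (RInt_correct (fun t => g (lin x w t))). apply exR; auto.
      rewrite <- (RInt_Chasles (fun t => g (lin x w t)) 0 M b) by (apply exR; auto).
      rewrite (RInt_ext (fun t => g (lin x w t)) (fun _ => 0) M b).
      rewrite RInt_const. unfold scal, plus; simpl. unfold mult; simpl. unfold plus; simpl. ring.
      intros t Ht. apply Hz. rewrite Rmin_left in Ht by lra. lra.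
    + apply locally_singleton. exact HP.
Qed.

Lemma lin_lin x w s t : lin (lin x w s) w t = lin x w (1 * t + s).
Proof. unfold lin; simpl; f_equal; ring. Qed.

Lemma beam_own (w : pt) g r (x : pt) s0 : (forall z, continuous g z) -> 0 <= r -> vanish r g ->
  fst w ^ 2 + snd w ^ 2 = 1 ->
  is_derive (fun s => beam w g (lin x w s)) s0 (- g (lin x w s0)).
Proof.
  intros Hg Hr Hv Hw.
  set (c := fst w * fst x + snd w * snd x).
  set (N := r + Rabs c + Rabs s0 + 2).
  set (F := fun t => g (lin x w t)).
  apply is_derive_ext_loc with (f := fun s => RInt F s N).
  - exists (mkposreal 1 Rlt_0_1). intros s Hs. change (Rabs (s - s0) < 1) in Hs.
    pose proof (Rabs_pos c). pose proof (Rle_abs c). pose proof (Rle_abs (-c)). rewrite Rabs_Ropp in *.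
    pose proof (Rle_abs s0). pose proof (Rle_abs (- s0)). rewrite Rabs_Ropp in *.
    pose proof (Rle_abs (s - s0)). pose proof (Rle_abs (- (s - s0))). rewrite Rabs_Ropp in *.
    rewrite (beam_trunc w g (lin x w s) (N - s)); auto.
    + rewrite (RInt_ext _ (fun y => scal 1 (F (1 * y + s))) 0 (N - s)).
      etransitivity; [| symmetry; apply (RInt_comp_lin F 1 s 0 (N - s))].
      assert (E1 : (1 * 0 + s = s)%R) by ring. assert (E2: (1 * (N - s) + s = N)%R) by ring. rewrite E1, E2. reflexivity.
      assert (E1 : (1 * 0 + s = s)%R) by ring. assert (E2: (1 * (N - s) + s = N)%R) by ring. rewrite E1, E2.
      apply exR; auto.
      intros y _. unfold scal; simpl; unfold mult; simpl; rewrite Rmult_1_l. unfold F. rewrite lin_lin. reflexivity.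
    + unfold N; lra.
    + intros t Ht. apply (vanish_w r g w); auto.
      assert (E : fst w * fst (lin (lin x w s) w t) + snd w * snd (lin (lin x w s) w t)
                  = c + (s + t) * (fst w ^ 2 + snd w ^ 2)) by (unfold lin, c; simpl; ring).
      rewrite E, Hw. unfold N in Ht.
      eapply Rlt_le_trans; [| apply Rle_abs]. lra.
  - apply (is_derive_RInt' F (fun a => RInt F a N) s0 N).
    + apply filter_forall. intros a. apply (RInt_correct F). apply exR; auto.
    + apply cont_comp_lin; auto.
Qed.

Definition Mv (r : R) (u v x : pt) : R :=
  (r + Rabs (- snd u * fst x + fst u * snd x)) / Rabs (fst u * snd v - snd u * fst v) + 1.

Lemma Mv_pos r u v x : 0 <= r -> fst u * snd v - snd u * fst v <> 0 -> 0 <= Mv r u v x.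
Proof.
  intros Hr HD. unfold Mv. pose proof (Rabs_pos (- snd u * fst x + fst u * snd x)).
  pose proof (Rabs_pos_lt _ HD).
  assert (0 <= (r + Rabs (- snd u * fst x + fst u * snd x)) / Rabs (fst u * snd v - snd u * fst v)).
  { apply Rdiv_le_0_compat; lra. }
  lra.
Qed.

Lemma far_v (g : pt -> R) r u v x : 0 <= r -> vanish r g -> fst u ^ 2 + snd u ^ 2 = 1 ->
  fst u * snd v - snd u * fst v <> 0 ->
  forall s t, Mv r u v x <= t -> g (lin (lin x u s) v t) = 0.
Proof.
  intros Hr Hv Hu HD s t Ht.
  set (c := - snd u * fst x + fst u * snd x).
  set (D := fst u * snd v - snd u * fst v).
  apply (vanish_w r g (- snd u, fst u)); auto.
  simpl. lra.
  replace (fst (- snd u, fst u) * fst (lin (lin x u s) v t) + snd (- snd u, fst u) * snd (lin (lin x u s) v t)) with (c + t * D) by (unfold lin, c, D; simpl; ring).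
  pose proof (Rabs_pos c). pose proof (Rabs_pos_lt _ HD).
  assert (HM : Mv r u v x * Rabs D = r + Rabs c + Rabs D).
  { unfold Mv. fold c. fold D. field. apply Rabs_no_R0. exact HD. }
  assert (HMp : 0 <= Mv r u v x) by (apply Mv_pos; auto).
  assert (Htd : Rabs (t * D) = t * Rabs D).
  { rewrite Rabs_mult, Rabs_right by lra. reflexivity. }
  assert (HH : Mv r u v x * Rabs D <= t * Rabs D) by (apply Rmult_le_compat_r; [apply Rabs_pos|exact Ht]).
  pose proof (Rabs_triang_inv (t * D) (- c)) as HT.
  replace (t * D - - c) with (c + t * D) in HT by ring. rewrite Rabs_Ropp in HT.
  rewrite HM in HH. rewrite Htd in HT. set (T := t * Rabs D) in *. assert (0 < Rabs D) by (apply Rabs_pos_lt; exact HD). lra.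
Qed.

Lemma lin_swap x u v s t : lin (lin x u s) v t = lin (lin x v t) u s.
Proof. unfold lin; simpl; f_equal; ring. Qed.

Lemma cont_Dw (g : pt -> R) (Hg : C1 g) w z : continuous (Dw w g) z.
Proof.
  destruct Hg as [_ [_ [_ [H1 H2]]]]. unfold Dw.
  apply (continuous_plus (fun y => fst w * d1 g y) (fun y => snd w * d2 g y)).
  apply (continuous_scal_r (fst w) (d1 g)). apply H1.
  apply (continuous_scal_r (snd w) (d2 g)). apply H2.
Qed.

Lemma cont2d_of (F : R -> R -> R) a b :
  @continuous (prod_UniformSpace R_UniformSpace R_UniformSpace) R_UniformSpace
    (fun z => F (fst z) (snd z)) (a, b) -> continuity_2d_pt F a b.
Proof.
  intros H eps. apply locally_2d_locally.
  apply (proj1 (filterlim_locally _ _)) with (eps := eps) in H.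
  exact H.
Qed.

Lemma cont2d_ext (F G : R -> R -> R) a b : (forall x y, F x y = G x y) ->
  continuity_2d_pt G a b -> continuity_2d_pt F a b.
Proof.
  intros E H eps. destruct (H eps) as [d Hd]. exists d. intros x y Hx Hy.
  rewrite !E. apply Hd; auto.
Qed.

Lemma beam_param (u v : pt) g G r x s0 : (forall z, continuous g z) ->
  (forall y s, is_derive (fun s => g (lin y u s)) s (G (lin y u s))) ->
  (forall z, continuous G z) -> 0 <= r -> vanish r g -> fst u ^ 2 + snd u ^ 2 = 1 ->
  fst u * snd v - snd u * fst v <> 0 ->
  is_derive (fun s => beam v g (lin x u s)) s0
    (RInt (fun t => G (lin (lin x u s0) v t)) 0 (Mv r u v x)).
Proof.
  intros Hc Hg HG Hr Hv Hu HD.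
  set (M := Mv r u v x).
  set (f := fun s t => g (lin (lin x u s) v t)).
  assert (Hder : forall s t, is_derive (fun z => f z t) s (G (lin (lin x u s) v t))).
  { intros s t. unfold f. 
    apply (is_derive_ext (fun z => g (lin (lin x v t) u z))).
    intros z. rewrite lin_swap. reflexivity.
    rewrite lin_swap. apply Hg. }
  apply (is_derive_ext (fun s => RInt (fun t => f s t) 0 M)).
  { intros s. symmetry. apply beam_trunc; auto. apply Mv_pos; auto.
    intros t Ht. apply (far_v g r u v x); auto. }
  replace (RInt (fun t => G (lin (lin x u s0) v t)) 0 M)
    with (RInt (fun t => Derive (fun z => f z t) s0) 0 M).
  apply is_derive_RInt_param.
  - apply filter_forall. intros s t _. eexists. apply Hder.
  - intros t _.
    apply (cont2d_ext _ (fun a b => G (lin (lin x u a) v b))).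
    intros a b. exact (is_derive_unique _ _ _ (Hder a b)).
    apply cont2d_of.
    apply (continuous_comp (fun z : R * R => lin (lin x u (fst z)) v (snd z)) G).
    apply cont_lin2. apply HG.
  - apply filter_forall. intros s. apply (exR g (lin x u s) v 0 M Hc).
  - apply RInt_ext. intros t _. exact (is_derive_unique _ _ _ (Hder s0 t)).
Qed.

Definition hp (f1 f2 : pt -> R) (a : pt) (y : pt) : R := dot (f1 y, f2 y) (perp a).
Definition Gh (f1 f2 : pt -> R) (a w : pt) (y : pt) : R := - snd a * Dw w f1 y + fst a * Dw w f2 y.

Lemma hp_eq f1 f2 a y : hp f1 f2 a y = - snd a * f1 y + fst a * f2 y.
Proof. unfold hp, dot, perp; simpl; ring. Qed.

Lemma hp_deriv f1 f2 (H1 : C1 f1) (H2 : C1 f2) a w y s :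
  is_derive (fun s => hp f1 f2 a (lin y w s)) s (Gh f1 f2 a w (lin y w s)).
Proof.
  pose proof (is_derive_scal _ _ (- snd a) _ (chain f1 H1 y w s)) as D1.
  pose proof (is_derive_scal _ _ (fst a) _ (chain f2 H2 y w s)) as D2.
  pose proof (is_derive_plus _ _ _ _ _ D1 D2) as D3.
  apply (is_derive_ext (fun s => plus (- snd a * f1 (lin y w s)) (fst a * f2 (lin y w s)))).
  intros t. rewrite hp_eq. reflexivity.
  exact D3.
Qed.

Lemma hp_cont f1 f2 (H1 : C1 f1) (H2 : C1 f2) a z : continuous (hp f1 f2 a) z.
Proof.
  apply (continuous_ext (fun y => plus (scal (- snd a) (f1 y)) (scal (fst a) (f2 y)))).
  intros y. rewrite hp_eq. reflexivity.
  apply (continuous_plus (fun y => scal (- snd a) (f1 y)) (fun y => scal (fst a) (f2 y))).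
  apply (continuous_scal_r (- snd a) f1). apply H1.
  apply (continuous_scal_r (fst a) f2). apply H2.
Qed.

Lemma Gh_cont f1 f2 (H1 : C1 f1) (H2 : C1 f2) a w z : continuous (Gh f1 f2 a w) z.
Proof.
  unfold Gh.
  apply (continuous_plus (fun y => scal (- snd a) (Dw w f1 y)) (fun y => scal (fst a) (Dw w f2 y))).
  apply (continuous_scal_r (- snd a) (Dw w f1)). apply cont_Dw; auto.
  apply (continuous_scal_r (fst a) (Dw w f2)). apply cont_Dw; auto.
Qed.

Lemma hp_vanish f1 f2 r a : vanish r f1 -> vanish r f2 -> vanish r (hp f1 f2 a).
Proof. intros V1 V2 y Hy. rewrite hp_eq, (V1 y Hy), (V2 y Hy). ring. Qed.

Lemma div_cont f1 f2 (H1 : C1 f1) (H2 : C1 f2) z : continuous (div_field f1 f2) z.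
Proof.
  destruct H1 as [_ [_ [_ [Hc1 _]]]]. destruct H2 as [_ [_ [_ [_ Hc2]]]].
  exact (continuous_plus (d1 f1) (d2 f2) z (Hc1 z) (Hc2 z)).
Qed.

Lemma div_vanish f1 f2 r : 0 <= r -> vanish r f1 -> vanish r f2 -> vanish r (div_field f1 f2).
Proof.
  intros Hr V1 V2 y Hy. unfold div_field.
  rewrite (vanish_d1 r f1 Hr V1 y Hy), (vanish_d2 r f2 Hr V2 y Hy). ring.
Qed.

Lemma lin0 q w : lin q w 0 = q.
Proof. destruct q; unfold lin; simpl; f_equal; ring. Qed.

Lemma main_formula u v f1 f2 r p s0 :
  fst u ^ 2 + snd u ^ 2 = 1 -> fst v ^ 2 + snd v ^ 2 = 1 ->
  fst u * snd v - snd u * fst v <> 0 -> 0 <= r -> C1 f1 -> C1 f2 ->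
  vanish r f1 -> vanish r f2 ->
  is_derive (fun s => TV u v f1 f2 (lin p u s)) s0
    (- (fst u * snd v - snd u * fst v) * beam v (div_field f1 f2) (lin p u s0)).
Proof.
  intros hu hv HD Hr H1 H2 V1 V2.
  set (q := lin p u s0). set (M := Mv r u v p).
  set (D := fst u * snd v - snd u * fst v).
  assert (HA : is_derive (fun s => beam u (hp f1 f2 u) (lin p u s)) s0 (- hp f1 f2 u q)).
  { apply (beam_own u (hp f1 f2 u) r); auto. apply hp_cont; auto. apply hp_vanish; auto. }
  assert (HB : is_derive (fun s => beam v (hp f1 f2 v) (lin p u s)) s0
                 (RInt (fun t => Gh f1 f2 v u (lin q v t)) 0 M)).
  { apply (beam_param u v (hp f1 f2 v) (Gh f1 f2 v u) r p s0); auto.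
    apply hp_cont; auto. intros y s. apply hp_deriv; auto. apply Gh_cont; auto.
    apply hp_vanish; auto. }
  pose proof (is_derive_plus _ _ _ _ _ (is_derive_opp _ _ _ HA) HB) as HT.
  assert (Hfar : forall g, vanish r g -> forall t, M <= t -> g (lin q v t) = 0).
  { intros g Vg t Ht. apply (far_v g r u v p); auto. }
  assert (FTC : RInt (fun t => Gh f1 f2 u v (lin q v t)) 0 M = - hp f1 f2 u q).
  { rewrite (RInt_ext _ (Derive (fun t => hp f1 f2 u (lin q v t)))).
    rewrite RInt_Derive.
    rewrite (Hfar (hp f1 f2 u)), lin0. exact (Rminus_0_l _). apply hp_vanish; auto. apply Rle_refl.
    intros t _. eexists. apply hp_deriv; auto.
    intros t _. apply (continuous_ext (fun t => Gh f1 f2 u v (lin q v t))).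
    intros z. symmetry. apply is_derive_unique. apply hp_deriv; auto.
    apply cont_comp_lin. apply Gh_cont; auto.
    intros t _. symmetry. apply is_derive_unique. apply hp_deriv; auto. }
  assert (BD : beam v (div_field f1 f2) q = RInt (fun t => div_field f1 f2 (lin q v t)) 0 M).
  { apply beam_trunc. apply div_cont; auto. apply Mv_pos; auto.
    apply Hfar. apply div_vanish; auto. }
  assert (I1 : is_RInt (fun t => - D * div_field f1 f2 (lin q v t)) 0 M
      (RInt (fun t => Gh f1 f2 v u (lin q v t)) 0 M - RInt (fun t => Gh f1 f2 u v (lin q v t)) 0 M)).
  { apply (is_RInt_ext (fun t => minus (Gh f1 f2 v u (lin q v t)) (Gh f1 f2 u v (lin q v t)))).
    intros t _. unfold minus, plus, opp; simpl. unfold Gh, Dw, div_field, D. ring.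
    apply (is_RInt_minus (V := R_NormedModule)); apply (RInt_correct (V := R_CompleteNormedModule));
      apply exR; apply Gh_cont; auto. }
  assert (I2 : is_RInt (fun t => - D * div_field f1 f2 (lin q v t)) 0 M
      (- D * RInt (fun t => div_field f1 f2 (lin q v t)) 0 M)).
  { apply (is_RInt_scal (V := R_NormedModule)). apply (RInt_correct (V := R_CompleteNormedModule)).
    apply exR. apply div_cont; auto. }
  apply (is_derive_ext (fun s => plus (opp (beam u (hp f1 f2 u) (lin p u s))) (beam v (hp f1 f2 v) (lin p u s)))).
  { intros s. reflexivity. }
  replace (- D * beam v (div_field f1 f2) q) with
    (plus (opp (- hp f1 f2 u q)) (RInt (fun t => Gh f1 f2 v u (lin q v t)) 0 M)).
  exact HT.
  rewrite BD. rewrite <- (is_RInt_unique _ _ _ _ I2), (is_RInt_unique _ _ _ _ I1), FTC.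
  unfold plus, opp; simpl. ring.
Qed.

Lemma beam_zero w g x : (forall z, continuous g z) -> (forall t, 0 <= t -> g (lin x w t) = 0) ->
  beam w g x = 0.
Proof.
  intros Hc Hz. rewrite (beam_trunc w g x 0); auto. exact (RInt_point (V := R_CompleteNormedModule) 0 (fun t => g (lin x w t))). apply Rle_refl.
Qed.

Theorem theorem2 (u v : pt) (r1 : R) (f1 f2 : pt -> R)
  (hu : fst u ^ 2 + snd u ^ 2 = 1) (hv : fst v ^ 2 + snd v ^ 2 = 1)
  (huv : fst u * snd v - snd u * fst v <> 0)
  (hr1 : 0 < r1)
  (hf1 : Cc2 f1 r1) (hf2 : Cc2 f2 r1) :
  (forall x : pt, TV u v f1 f2 x = 0) <-> (forall x : pt, div_field f1 f2 x = 0).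
Proof.
  destruct hf1 as [[H1 _] S1]. destruct hf2 as [[H2 _] S2].
  destruct (supp_of_Cc f1 r1 S1) as [ra [Hra Va]].
  destruct (supp_of_Cc f2 r1 S2) as [rb [Hrb Vb]].
  set (r := Rmax ra rb).
  assert (Hr : 0 <= r) by (unfold r; apply (Rle_trans _ ra); [auto | apply Rmax_l]).
  assert (V1 : vanish r f1) by (apply (vanish_mono ra); auto; apply Rmax_l).
  assert (V2 : vanish r f2) by (apply (vanish_mono rb); auto; apply Rmax_r).
  set (D := fst u * snd v - snd u * fst v).
  assert (HDa : 0 < Rabs D) by (apply Rabs_pos_lt; exact huv).
  split.
  - intros HT.
    assert (HB : forall y, beam v (div_field f1 f2) y = 0).
    { intros y.
      pose proof (main_formula u v f1 f2 r y 0 hu hv huv Hr H1 H2 V1 V2) as HM.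
      assert (H0 : is_derive (fun s => TV u v f1 f2 (lin y u s)) 0 0).
      { apply (is_derive_ext (fun _ => 0)). intros s. rewrite HT. reflexivity.
        apply (is_derive_const (K := R_AbsRing) (V := R_NormedModule)). }
      pose proof (is_derive_unique _ _ _ HM) as E1.
      pose proof (is_derive_unique _ _ _ H0) as E2.
      rewrite E1 in E2. rewrite lin0 in E2.
      destruct (Rmult_integral _ _ E2) as [E|E]; auto.
      exfalso. apply huv. lra. }
    intros q.
    pose proof (beam_own v (div_field f1 f2) r q 0 (div_cont f1 f2 H1 H2) Hr
                  (div_vanish f1 f2 r Hr V1 V2) hv) as HO.
    assert (H0 : is_derive (fun s => beam v (div_field f1 f2) (lin q v s)) 0 0).
    { apply (is_derive_ext (fun _ => 0)). intros s. rewrite HB. reflexivity.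
      apply (is_derive_const (K := R_AbsRing) (V := R_NormedModule)). }
    pose proof (is_derive_unique _ _ _ HO) as E1.
    pose proof (is_derive_unique _ _ _ H0) as E2.
    rewrite E1, lin0 in E2. lra.
  - intros Hdiv x.
    assert (HB : forall y, beam v (div_field f1 f2) y = 0).
    { intros y. apply beam_zero. apply div_cont; auto. intros; apply Hdiv. }
    set (phi := fun s => TV u v f1 f2 (lin x u s)).
    assert (Hd : forall s, is_derive phi s 0).
    { intros s. pose proof (main_formula u v f1 f2 r x s hu hv huv Hr H1 H2 V1 V2) as HM.
      rewrite HB, Rmult_0_r in HM. exact HM. }
    set (cu := fst u * fst x + snd u * snd x).
    set (cv := - snd v * fst x + fst v * snd x).
    set (S := r + Rabs cu + 1 + (r + Rabs cv + 1) / Rabs D).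
    assert (HS1 : 0 <= (r + Rabs cv + 1) / Rabs D).
    { apply Rdiv_le_0_compat. pose proof (Rabs_pos cv). lra. exact HDa. }
    assert (HS2 : S * Rabs D >= r + Rabs cv + 1).
    { assert (E : (r + Rabs cv + 1) / Rabs D * Rabs D = r + Rabs cv + 1) by (field; lra).
      unfold S. pose proof (Rabs_pos cu).
      assert (0 <= (r + Rabs cu + 1) * Rabs D) by (apply Rmult_le_pos; lra).
      rewrite Rmult_plus_distr_r, E. lra. }
    assert (HS0 : 0 <= S) by (unfold S; pose proof (Rabs_pos cu); lra).
    assert (HphiS : phi S = 0).
    { unfold phi, TV.
      rewrite (beam_zero u _ (lin x u S)), (beam_zero v _ (lin x u S)). ring.
      - apply (hp_cont f1 f2 H1 H2 v).
      - intros t Ht. apply (vanish_w r (hp f1 f2 v) (- snd v, fst v)); auto.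
        apply hp_vanish; auto. simpl; lra.
        replace (fst (- snd v, fst v) * fst (lin (lin x u S) v t) + snd (- snd v, fst v) * snd (lin (lin x u S) v t))
          with (cv - S * D) by (unfold lin, cv, D; simpl; ring).
        pose proof (Rabs_triang_inv (S * D) cv) as HT.
        replace (S * D - cv) with (- (cv - S * D)) in HT by ring.
        rewrite Rabs_Ropp in HT. rewrite Rabs_mult, (Rabs_right S) in HT by lra.
        set (T := S * Rabs D) in *. lra.
      - apply (hp_cont f1 f2 H1 H2 u).
      - intros t Ht. apply (vanish_w r (hp f1 f2 u) u); auto.
        apply hp_vanish; auto.
        replace (fst u * fst (lin (lin x u S) u t) + snd u * snd (lin (lin x u S) u t))
          with (cu + (S + t) * (fst u ^ 2 + snd u ^ 2)) by (unfold lin, cu; simpl; ring).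
        rewrite hu. eapply Rlt_le_trans; [| apply Rle_abs].
        pose proof (Rle_abs (- cu)). rewrite Rabs_Ropp in *.
        unfold S. lra. }
    destruct (MVT_gen phi 0 S (fun _ => 0)) as [c [_ Hc]].
    + intros y _. apply Hd.
    + intros y _. apply continuity_pt_filterlim. apply (ex_derive_continuous phi).
      eexists. apply Hd.
    + unfold phi in Hc, HphiS. rewrite lin0 in Hc. lra.
Qed.
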